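(* There is an absolute constant $C>0$ such that the following holds. Let $n,k$ be positive integers, let $p_1,\dots,p_n\in[0,1]$, and let $X_1,\dots,X_n$ be independent indicator random variables with $\mathbb{E}[X_i]=p_i$. Then there exist $q_1,\dots,q_n\in[0,1]$ such that: (1) $|q_i-p_i|\le C/k$ for all $i$; (2) each $q_i$ is an integer multiple of $1/k$; (3) if $Y_1,\dots,Y_n$ are independent indicator random variables with $\mathbb{E}[Y_i]=q_i$, then $\left\|\sum_i X_i-\sum_i Y_i\right\|\le C k^{-1/2}$ and, for every $j\in[n]$, $\left\|\sum_{i\ne j}X_i-\sum_{i\ne j}Y_i\right\|\le Ck^{-1/2}$.
   Context: For integer-valued random variables $A,B$ (identified with their distributions), $\|A-B\|$ denotes the total variation distance $\frac12\sum_{a}|\Pr[A=a]-\Pr[B=a]|$. *)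

(* Defs.v *)
From Stdlib Require Import Reals List ZArith.
Import ListNotations.
Open Scope R_scope.

Fixpoint bool_lists (n : nat) : list (list bool) :=
  match n with
  | O => [[]]
  | S n' => map (cons true) (bool_lists n') ++ map (cons false) (bool_lists n')
  end.

Fixpoint outcome_weight (ps : list R) (x : list bool) : R :=
  match ps, x with
  | p :: ps', b :: x' => (if b then p else 1 - p) * outcome_weight ps' x'
  | _, _ => 1
  end.

Definition count_true (x : list bool) : nat :=
  length (filter (fun b : bool => b) x).

Definition indsum_pmf (ps : list R) (m : nat) : R :=
  fold_right Rplus 0
    (map (outcome_weight ps)
       (filter (fun x => Nat.eqb (count_true x) m) (bool_lists (length ps)))).

(* Total variation distance between the sums (both supported on 0..N). *)
Definition tv_indsum (ps qs : list R) : R :=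
  / 2 * sum_f_R0 (fun m => Rabs (indsum_pmf ps m - indsum_pmf qs m))
                 (Nat.max (length ps) (length qs)).

(* Remove the j-th entry (0-based). *)
Definition remove_nth {A : Type} (j : nat) (l : list A) : list A :=
  firstn j l ++ skipn (S j) l.

(* Main.v *)
Require Import Defs.
From Stdlib Require Import Reals List ZArith Lra Lia Psatz Permutation FunctionalExtensionality.
Import ListNotations.
Open Scope R_scope.

Definition fn := nat -> R.
Definition sh (f : fn) : fn := fun m => match m with O => 0 | S m' => f m' end.
Definition vadd (f g : fn) : fn := fun m => f m + g m.
Definition vsub (f g : fn) : fn := fun m => f m - g m.
Definition vscal (a : R) (f : fn) : fn := fun m => a * f m.
Definition Bop (p : R) (f : fn) : fn := fun m => (1 - p) * f m + p * sh f m.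
Definition Dop (f : fn) : fn := fun m => f m - sh f m.
Definition delta0 : fn := fun m => match m with O => 1 | _ => 0 end.
Definition Tl (l : list R) (f : fn) : fn := fold_right Bop f l.
Definition Pl (l : list R) : fn := Tl l delta0.
Definition nrm (M : nat) (f : fn) : R := sum_f_R0 (fun m => Rabs (f m)) M.
Definition bnd (f : fn) (c : R) : Prop := forall M, nrm M f <= c.
Definition probs (l : list R) : Prop := Forall (fun x => 0 <= x <= 1) l.

Lemma Rabs_m1 : Rabs (-1) = 1.
Proof. unfold Rabs; destruct (Rcase_abs (-1)); lra. Qed.

Lemma nrm_nonneg M f : 0 <= nrm M f.
Proof. unfold nrm; induction M; simpl; [apply Rabs_pos|]. pose proof (Rabs_pos (f (S M))); lra. Qed.

Lemma bnd_nonneg f c : bnd f c -> 0 <= c.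
Proof. intros H; specialize (H O); pose proof (nrm_nonneg O f); lra. Qed.

Lemma nrm_lin M a b f g :
  nrm M (fun m => a * f m + b * g m) <= Rabs a * nrm M f + Rabs b * nrm M g.
Proof.
  unfold nrm; induction M; simpl.
  - eapply Rle_trans; [apply Rabs_triang|]. rewrite !Rabs_mult; lra.
  - pose proof (Rabs_triang (a * f (S M)) (b * g (S M))). rewrite !Rabs_mult in H. nra.
Qed.

Lemma nrm_S_sh M f : nrm (S M) (sh f) = nrm M f.
Proof.
  unfold nrm; induction M.
  - simpl. rewrite Rabs_R0; ring.
  - change (sum_f_R0 (fun m => Rabs (sh f m)) (S (S M))) with
      (sum_f_R0 (fun m => Rabs (sh f m)) (S M) + Rabs (f (S M))).
    rewrite IHM. simpl. ring.
Qed.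

Lemma nrm_mono M N f : (M <= N)%nat -> nrm M f <= nrm N f.
Proof.
  intros H; induction H; [lra|]. unfold nrm in *; simpl. pose proof (Rabs_pos (f (S m))); lra.
Qed.

Lemma nrm_sh M f : nrm M (sh f) <= nrm M f.
Proof.
  destruct M. unfold nrm; simpl; rewrite Rabs_R0; apply Rabs_pos.
  rewrite nrm_S_sh. apply nrm_mono; lia.
Qed.

Lemma bnd_sh f c : bnd f c -> bnd (sh f) c.
Proof. intros H M; eapply Rle_trans; [apply nrm_sh| apply H]. Qed.

Lemma bnd_lin a b f g c d : bnd f c -> bnd g d ->
  bnd (fun m => a * f m + b * g m) (Rabs a * c + Rabs b * d).
Proof.
  intros Hf Hg M. eapply Rle_trans; [apply nrm_lin|].
  pose proof (Rabs_pos a); pose proof (Rabs_pos b); specialize (Hf M); specialize (Hg M). nra.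
Qed.

Lemma bnd_ext f g c : (forall m, f m = g m) -> bnd f c -> bnd g c.
Proof.
  intros E H M. assert (nrm M g = nrm M f) as ->; [|apply H].
  unfold nrm; induction M; simpl; rewrite E; [reflexivity|]. rewrite IHM; reflexivity.
Qed.

Lemma bnd_mono f c d : bnd f c -> c <= d -> bnd f d.
Proof. intros H Hc M; specialize (H M); lra. Qed.

Lemma bnd_add f g c d : bnd f c -> bnd g d -> bnd (vadd f g) (c + d).
Proof.
  intros Hf Hg. eapply bnd_ext with (f := fun m => 1 * f m + 1 * g m).
  { intros; unfold vadd; ring. }
  eapply bnd_mono; [apply bnd_lin; eauto|]. rewrite Rabs_R1; lra.
Qed.

Lemma bnd_sub f g c d : bnd f c -> bnd g d -> bnd (vsub f g) (c + d).
Proof.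
  intros Hf Hg. eapply bnd_ext with (f := fun m => 1 * f m + (-1) * g m).
  { intros; unfold vsub; ring. }
  eapply bnd_mono; [apply bnd_lin; eauto|]. rewrite Rabs_R1, Rabs_m1; lra.
Qed.

Lemma bnd_scal a f c : bnd f c -> bnd (vscal a f) (Rabs a * c).
Proof.
  intros Hf. eapply bnd_ext with (f := fun m => a * f m + 0 * f m).
  { intros; unfold vscal; ring. }
  eapply bnd_mono; [apply bnd_lin; eauto|]. rewrite Rabs_R0; lra.
Qed.

Lemma bnd_tri f g h c d : bnd (vsub f g) c -> bnd (vsub g h) d -> bnd (vsub f h) (c + d).
Proof.
  intros H1 H2. eapply bnd_ext; [|apply (bnd_add _ _ _ _ H1 H2)].
  intros; unfold vadd, vsub; ring.
Qed.

Lemma bnd_Bop p f c : 0 <= p <= 1 -> bnd f c -> bnd (Bop p f) c.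
Proof.
  intros Hp Hf. unfold Bop. eapply bnd_mono; [apply bnd_lin; [apply Hf| apply bnd_sh, Hf]|].
  rewrite !Rabs_right by lra. lra.
Qed.

Lemma bnd_Tl l f c : probs l -> bnd f c -> bnd (Tl l f) c.
Proof.
  intros Hl Hf; induction Hl; simpl; auto. apply bnd_Bop; auto.
Qed.

Lemma bnd_Dop f c : bnd f c -> bnd (Dop f) (2 * c).
Proof.
  intros Hf. unfold Dop. eapply bnd_ext with (f := fun m => 1 * f m + (-1) * sh f m).
  { intros; ring. }
  eapply bnd_mono; [apply bnd_lin; [apply Hf| apply bnd_sh, Hf]|].
  rewrite Rabs_R1, Rabs_m1; lra.
Qed.

Lemma bnd_delta0 : bnd delta0 1.
Proof.
  intros M; unfold nrm; induction M; simpl. rewrite Rabs_R1; lra. rewrite Rabs_R0; lra.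
Qed.

Lemma bnd_Pl l : probs l -> bnd (Pl l) 1.
Proof. intros; apply bnd_Tl; auto; apply bnd_delta0. Qed.

Lemma sh_Bop p f : sh (Bop p f) = Bop p (sh f).
Proof. apply functional_extensionality; intros [|m]; unfold Bop, sh; simpl; ring. Qed.

Lemma Bop_comm p q f : Bop p (Bop q f) = Bop q (Bop p f).
Proof.
  apply functional_extensionality; intros m. unfold Bop at 1 3. rewrite !sh_Bop.
  unfold Bop; ring.
Qed.

Lemma Dop_Bop p f : Dop (Bop p f) = Bop p (Dop f).
Proof.
  apply functional_extensionality; intros m. unfold Dop at 1. rewrite sh_Bop.
  unfold Bop, Dop; destruct m; simpl; ring.
Qed.

Lemma sh_Dop f : sh (Dop f) = Dop (sh f).
Proof. apply functional_extensionality; intros [|m]; unfold Dop, sh; simpl; ring. Qed.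

Lemma Tl_Bop l p f : Tl l (Bop p f) = Bop p (Tl l f).
Proof. induction l; simpl; auto. rewrite IHl, Bop_comm; auto. Qed.

Lemma Tl_Dop l f : Tl l (Dop f) = Dop (Tl l f).
Proof. induction l; simpl; auto. rewrite IHl, Dop_Bop; auto. Qed.

Lemma Tl_app l1 l2 f : Tl (l1 ++ l2) f = Tl l1 (Tl l2 f).
Proof. unfold Tl; apply fold_right_app. Qed.

Lemma Tl_comm l1 l2 f : Tl l1 (Tl l2 f) = Tl l2 (Tl l1 f).
Proof. induction l1; simpl; auto. rewrite IHl1, Tl_Bop; auto. Qed.

Lemma Tl_perm l l' f : Permutation l l' -> Tl l f = Tl l' f.
Proof.
  intros H; induction H; simpl; auto. rewrite IHPermutation; auto.
  apply Bop_comm. congruence.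
Qed.

Lemma Pl_perm l l' : Permutation l l' -> Pl l = Pl l'.
Proof. apply Tl_perm. Qed.

Lemma Pl_app l1 l2 : Pl (l1 ++ l2) = Tl l1 (Pl l2).
Proof. apply Tl_app. Qed.

Lemma Bop_sub p f g : Bop p (vsub f g) = vsub (Bop p f) (Bop p g).
Proof. apply functional_extensionality; intros [|m]; unfold Bop, vsub, sh; simpl; ring. Qed.

Lemma Tl_sub l f g : Tl l (vsub f g) = vsub (Tl l f) (Tl l g).
Proof. induction l; simpl; auto. rewrite IHl, Bop_sub; auto. Qed.

Lemma Bop_scal p a f : Bop p (vscal a f) = vscal a (Bop p f).
Proof. apply functional_extensionality; intros [|m]; unfold Bop, vscal, sh; simpl; ring. Qed.

Lemma Tl_scal l a f : Tl l (vscal a f) = vscal a (Tl l f).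
Proof. induction l; simpl; auto. rewrite IHl, Bop_scal; auto. Qed.

Lemma Bop_add p f g : Bop p (vadd f g) = vadd (Bop p f) (Bop p g).
Proof. apply functional_extensionality; intros [|m]; unfold Bop, vadd, sh; simpl; ring. Qed.

Lemma Tl_add l f g : Tl l (vadd f g) = vadd (Tl l f) (Tl l g).
Proof. induction l; simpl; auto. rewrite IHl, Bop_add; auto. Qed.

Lemma Dop_sub f g : Dop (vsub f g) = vsub (Dop f) (Dop g).
Proof. apply functional_extensionality; intros [|m]; unfold Dop, vsub, sh; simpl; ring. Qed.
Lemma Dop_scal a f : Dop (vscal a f) = vscal a (Dop f).
Proof. apply functional_extensionality; intros [|m]; unfold Dop, vscal, sh; simpl; ring. Qed.
Lemma Dop_add f g : Dop (vadd f g) = vadd (Dop f) (Dop g).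
Proof. apply functional_extensionality; intros [|m]; unfold Dop, vadd, sh; simpl; ring. Qed.

Lemma Bop_single u u' g : vsub (Bop u g) (Bop u' g) = vscal (u' - u) (Dop g).
Proof. apply functional_extensionality; intros m; unfold Bop, vsub, vscal, Dop; ring. Qed.

Lemma Bop_pair u v u' v' g : u + v = u' + v' ->
  vsub (Bop u (Bop v g)) (Bop u' (Bop v' g)) = vscal (u * v - u' * v') (Dop (Dop g)).
Proof.
  intros E. apply functional_extensionality; intros m.
  unfold vsub, vscal, Dop at 1. rewrite sh_Dop. unfold Bop at 1 3. rewrite !sh_Bop.
  unfold Bop, Dop.
  replace v' with (u + v - u') by lra. ring.
Qed.

Lemma fr_app l1 l2 : fold_right Rplus 0 (l1 ++ l2) = fold_right Rplus 0 l1 + fold_right Rplus 0 l2.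
Proof. induction l1; simpl; [ring|]. rewrite IHl1; ring. Qed.

Lemma fr_scal {A} (c : R) (f : A -> R) l :
  fold_right Rplus 0 (map (fun x => c * f x) l) = c * fold_right Rplus 0 (map f l).
Proof. induction l; simpl; [ring|]. rewrite IHl; ring. Qed.

Lemma filter_map_c {A B} (f : B -> bool) (g : A -> B) l :
  filter f (map g l) = map g (filter (fun x => f (g x)) l).
Proof. induction l; simpl; auto. destruct (f (g a)); simpl; rewrite IHl; auto. Qed.

Lemma filter_false {A} (l : list A) : filter (fun _ => false) l = [].
Proof. induction l; auto. Qed.

Lemma indsum_Pl ps m : indsum_pmf ps m = Pl ps m.
Proof.
  revert m; induction ps as [|p ps IH]; intros m.
  - unfold indsum_pmf; simpl. destruct m; simpl; ring.
  - unfold indsum_pmf. simpl length. simpl bool_lists.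
    rewrite filter_app, !filter_map_c, map_app, !map_map, fr_app.
    change (Pl (p :: ps) m) with (Bop p (Pl ps) m). unfold Bop, sh.
    simpl outcome_weight.
    rewrite (fr_scal p (outcome_weight ps)), (fr_scal (1 - p) (outcome_weight ps)).
    assert (E2 : filter (fun x => count_true (false :: x) =? m)%nat (bool_lists (length ps))
              = filter (fun x => count_true x =? m)%nat (bool_lists (length ps))) by reflexivity.
    rewrite E2. fold (indsum_pmf ps m). rewrite IH.
    destruct m as [|m].
    + assert (E1 : filter (fun x => count_true (true :: x) =? 0)%nat (bool_lists (length ps)) = []).
      { rewrite <- (filter_false (bool_lists (length ps))). apply filter_ext. reflexivity. }
      rewrite E1. simpl. ring.
    + assert (E1 : filter (fun x => count_true (true :: x) =? S m)%nat (bool_lists (length ps))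
              = filter (fun x => count_true x =? m)%nat (bool_lists (length ps))) by reflexivity.
      rewrite E1. fold (indsum_pmf ps m). rewrite IH. ring.
Qed.

Lemma tv_bnd p q c : bnd (vsub (Pl p) (Pl q)) c -> tv_indsum p q <= c / 2.
Proof.
  intros H. unfold tv_indsum. specialize (H (Nat.max (length p) (length q))).
  unfold nrm, vsub in H.
  assert (E : sum_f_R0 (fun m => Rabs (indsum_pmf p m - indsum_pmf q m)) (Nat.max (length p) (length q))
    = sum_f_R0 (fun m => Rabs (Pl p m - Pl q m)) (Nat.max (length p) (length q))).
  { apply sum_eq; intros; rewrite !indsum_Pl; auto. }
  rewrite E. lra.
Qed.

Lemma Pl_cons x l : Pl (x :: l) = Bop x (Pl l).
Proof. reflexivity. Qed.

Lemma Pl_supp l m : (length l < m)%nat -> Pl l m = 0.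
Proof.
  revert m; induction l as [|x l IH]; intros m Hm.
  - simpl in Hm. destruct m; [lia|reflexivity].
  - rewrite Pl_cons. unfold Bop, sh. simpl in Hm. destruct m; [lia|].
    rewrite (IH (S m)) by lia. rewrite (IH m) by lia. ring.
Qed.

Lemma Pl_nonneg l m : probs l -> 0 <= Pl l m.
Proof.
  intros H; revert m; induction H as [|x l Hx Hl IH]; intros m.
  - unfold Pl; simpl; destruct m; simpl; lra.
  - rewrite Pl_cons. unfold Bop, sh. destruct m.
    + specialize (IH O); nra.
    + pose proof (IH (S m)); pose proof (IH m). nra.
Qed.

Definition bb (n : nat) : fn := Pl (repeat (/2) n).

Lemma bb_S n : bb (S n) = Bop (/2) (bb n).
Proof. reflexivity. Qed.

Lemma probs_repeat n : probs (repeat (/2) n).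
Proof. induction n; constructor; auto; lra. Qed.

Lemma bb_nonneg n m : 0 <= bb n m.
Proof. apply Pl_nonneg, probs_repeat. Qed.

Lemma bb_supp n m : (n < m)%nat -> bb n m = 0.
Proof. intros; apply Pl_supp; rewrite repeat_length; auto. Qed.

Lemma bb_0_0 : bb 0 O = 1.
Proof. reflexivity. Qed.

Lemma bb_ratio n i : (i < n)%nat -> bb n (S i) * (INR i + 1) = bb n i * (INR n - INR i).
Proof.
  revert i; induction n as [|n IH]; intros i Hi; [lia|].
  rewrite !bb_S; unfold Bop, sh. rewrite S_INR.
  destruct i as [|i].
  - destruct n as [|n].
    + rewrite bb_0_0, (bb_supp 0 1) by lia. simpl. field.
    + pose proof (IH O ltac:(lia)) as H. replace (INR 0) with 0 in * by reflexivity. rewrite S_INR in *. nra.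
  - rewrite S_INR.
    destruct (Nat.eq_dec (S i) n) as [E|E].
    + subst n. rewrite (bb_supp (S i) (S (S i))) by lia.
      pose proof (IH i ltac:(lia)). rewrite S_INR in *. nra.
    + pose proof (IH i ltac:(lia)). pose proof (IH (S i) ltac:(lia)). rewrite S_INR in *. nra.
Qed.

Lemma bb_up n i : (2*i+1 <= n)%nat -> bb n i <= bb n (S i).
Proof.
  intros H. pose proof (bb_ratio n i ltac:(lia)) as R.
  assert (INR (2*i+1) <= INR n) by (apply le_INR; auto).
  rewrite plus_INR, mult_INR in H0. simpl in H0.
  pose proof (bb_nonneg n i). pose proof (pos_INR i). nra.
Qed.

Lemma bb_down n i : (n <= 2*i)%nat -> bb n (S i) <= bb n i.
Proof.
  intros H. destruct (Nat.lt_ge_cases i n) as [Hi|Hi].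
  - pose proof (bb_ratio n i Hi) as R.
    assert (INR n <= INR (2*i)) by (apply le_INR; auto).
    rewrite mult_INR in H0. simpl in H0.
    pose proof (bb_nonneg n (S i)). pose proof (bb_nonneg n i). pose proof (pos_INR i). nra.
  - rewrite (bb_supp n (S i)) by lia. apply bb_nonneg.
Qed.

Lemma nrm_S M f : nrm (S M) f = nrm M f + Rabs (f (S M)).
Proof. reflexivity. Qed.

Lemma bb_tele m M :
  ((M <= m)%nat -> nrm M (Dop (bb (2*m))) = bb (2*m) M) /\
  ((m <= M)%nat -> nrm M (Dop (bb (2*m))) = 2 * bb (2*m) m - bb (2*m) M).
Proof.
  induction M as [|M IH].
  - unfold nrm, Dop, sh; simpl. rewrite Rminus_0_r, Rabs_right by (apply Rle_ge, bb_nonneg).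
    split; intros; [reflexivity|]. assert (m = O) by lia; subst; simpl; ring.
  - destruct IH as [IH1 IH2]. rewrite nrm_S. change (Rabs (Dop (bb (2*m)) (S M))) with (Rabs (bb (2*m) (S M) - bb (2*m) M)).
    split; intros H.
    + rewrite IH1 by lia. rewrite Rabs_right. ring.
      pose proof (bb_up (2*m) M ltac:(lia)); lra.
    + destruct (Nat.eq_dec M m) as [E|E].
      * subst. rewrite IH1 by lia. rewrite Rabs_left1. ring.
        pose proof (bb_down (2*m) m ltac:(lia)); lra.
      * destruct (Nat.le_gt_cases m M) as [H'|H'].
        -- rewrite IH2 by lia. rewrite Rabs_left1. ring.
           pose proof (bb_down (2*m) M ltac:(lia)); lra.
        -- assert (S M = m) by lia. subst m. rewrite IH1 by lia. rewrite Rabs_right. ring.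
           pose proof (bb_up (2*(S M)) M ltac:(lia)); lra.
Qed.

Lemma bb_even_bnd m : bnd (Dop (bb (2*m))) (2 * bb (2*m) m).
Proof.
  intros M. eapply Rle_trans; [apply (nrm_mono M (Nat.max M m)); lia|].
  destruct (bb_tele m (Nat.max M m)) as [_ H]. rewrite H by lia.
  pose proof (bb_nonneg (2*m) (Nat.max M m)); lra.
Qed.

Lemma bb_SS n j : bb (S n) (S j) = /2 * bb n (S j) + /2 * bb n j.
Proof. rewrite bb_S; unfold Bop, sh; field. Qed.
Lemma bb_S0 n : bb (S n) O = /2 * bb n O.
Proof. rewrite bb_S; unfold Bop, sh; field. Qed.

Lemma cc_rec m : bb (2 * S m) (S m) * (2 * INR m + 2) = bb (2*m) m * (2 * INR m + 1).
Proof.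
  replace (2 * S m)%nat with (S (S (2*m))) by lia.
  rewrite !bb_SS.
  destruct m as [|m].
  - rewrite bb_S0. simpl. rewrite (bb_supp 0 1) by lia. change (bb 0 0%nat) with 1. simpl. field.
  - rewrite bb_SS.
    pose proof (bb_ratio (2 * S m) (S m) ltac:(lia)) as R1.
    pose proof (bb_ratio (2 * S m) m ltac:(lia)) as R2.
    rewrite mult_INR in *. change (INR 2) with 2 in *. rewrite S_INR in *.
    set (c := bb (2 * S m) (S m)) in *.
    set (u := bb (2 * S m) (S (S m))) in *.
    set (d := bb (2 * S m) m) in *.
    pose proof (pos_INR m).
    assert (Hu : u = c * (INR m + 1) / (INR m + 2)).
    { apply (Rmult_eq_reg_r (INR m + 2)); [|lra]. field_simplify; [|lra]. lra. }
    assert (Hd : d = c * (INR m + 1) / (INR m + 2)).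
    { apply (Rmult_eq_reg_r (INR m + 2)); [|lra]. field_simplify; [|lra]. lra. }
    rewrite Hu, Hd. field. lra.
Qed.

Lemma cc_bound m : bb (2*m) m * bb (2*m) m * (2 * INR m + 1) <= 1.
Proof.
  induction m as [|m IH].
  - change (bb (2*0) 0%nat) with 1. simpl. lra.
  - pose proof (cc_rec m) as R. rewrite S_INR.
    set (x := bb (2 * S m) (S m)) in *. set (c := bb (2*m) m) in *.
    pose proof (pos_INR m).
    assert (Hx : x = c * (2 * INR m + 1) / (2 * INR m + 2)).
    { apply (Rmult_eq_reg_r (2 * INR m + 2)); [|lra]. field_simplify; [|lra]. lra. }
    rewrite Hx.
    assert (Hc : 0 <= c * c) by nra.
    apply Rle_trans with (c * c * (2 * INR m + 1)); [|exact IH].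
    replace (c * (2 * INR m + 1) / (2 * INR m + 2) * (c * (2 * INR m + 1) / (2 * INR m + 2)) *
      (2 * (INR m + 1) + 1)) with
      (c * c * (2 * INR m + 1) * ((2 * INR m + 1) * (2 * INR m + 3) / ((2 * INR m + 2) * (2 * INR m + 2))))
      by (field; lra).
    assert (0 <= c * c * (2 * INR m + 1)) by nra.
    assert ((2 * INR m + 1) * (2 * INR m + 3) / ((2 * INR m + 2) * (2 * INR m + 2)) <= 1).
    { apply (Rmult_le_reg_r ((2 * INR m + 2) * (2 * INR m + 2))); [nra|].
      field_simplify; nra. }
    nra.
Qed.

Lemma h_bound n : exists h, 0 <= h /\ h * h * (INR n + 1) <= 8 /\ bnd (Dop (bb n)) h.
Proof.
  destruct (Nat.Even_or_Odd n) as [[m ->]|[m ->]].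
  - exists (2 * bb (2*m) m). pose proof (bb_nonneg (2*m) m). pose proof (cc_bound m).
    rewrite mult_INR; simpl INR. repeat split; [lra| nra | apply bb_even_bnd].
  - exists (2 * bb (2*m) m). pose proof (bb_nonneg (2*m) m). pose proof (cc_bound m).
    pose proof (pos_INR m).
    rewrite plus_INR, mult_INR; simpl INR. repeat split; [lra| nra |].
    replace (2*m+1)%nat with (S (2*m)) by lia. rewrite bb_S, Dop_Bop.
    apply bnd_Bop; [lra|]. apply bb_even_bnd.
Qed.

Lemma Tl_sh l f : Tl l (sh f) = sh (Tl l f).
Proof. induction l; simpl; auto. rewrite IHl, sh_Bop; auto. Qed.

Lemma nrm_peel K g : nrm (S K) g = Rabs (g O) + nrm K (fun m => g (S m)).
Proof.
  unfold nrm; induction K.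
  - simpl; ring.
  - change (sum_f_R0 (fun m => Rabs (g m)) (S (S K))) with
      (sum_f_R0 (fun m => Rabs (g m)) (S K) + Rabs (g (S (S K)))).
    rewrite IHK. simpl. ring.
Qed.

Lemma conv l h : bnd (Dop (Pl l)) h -> forall K g, (forall m, (K < m)%nat -> g m = 0) ->
  bnd (Dop (Tl l g)) (h * nrm K g).
Proof.
  intros Hh K; induction K as [|K IH]; intros g Hg.
  - assert (E : g = vscal (g O) delta0).
    { apply functional_extensionality; intros [|m]; unfold vscal, delta0; [ring|].
      rewrite Hg by lia; ring. }
    rewrite E, Tl_scal, Dop_scal. eapply bnd_mono; [apply bnd_scal, Hh|].
    unfold nrm, vscal; simpl. unfold delta0. rewrite Rmult_1_r. lra.
  - set (g2 := fun m => g (S m)).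
    assert (E : g = vadd (vscal (g O) delta0) (sh g2)).
    { apply functional_extensionality; intros [|m]; unfold vadd, vscal, delta0, sh, g2; ring. }
    assert (Hg2 : forall m, (K < m)%nat -> g2 m = 0) by (intros; unfold g2; apply Hg; lia).
    rewrite nrm_peel. fold g2.
    rewrite E at 1. rewrite Tl_add, Dop_add, Tl_scal, Dop_scal, Tl_sh, <- sh_Dop.
    eapply bnd_mono; [apply bnd_add; [apply bnd_scal, Hh| apply bnd_sh, IH, Hg2]|].
    lra.
Qed.

Lemma bb_app a b : bb (a + b) = Tl (repeat (/2) a) (bb b).
Proof. unfold bb, Pl. rewrite repeat_app, Tl_app. reflexivity. Qed.

Lemma D2_bb n : bnd (Dop (Dop (bb n))) (16 / (INR n + 1)).
Proof.
  set (a := Nat.div2 n). set (b := (n - a)%nat).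
  assert (Ha : (2 * a <= n <= 2 * a + 1)%nat).
  { unfold a. pose proof (Nat.div2_odd n). destruct (Nat.odd n); simpl in H; lia. }
  replace n with (a + b)%nat at 1 by (unfold b; lia).
  rewrite bb_app, <- Tl_Dop.
  destruct (h_bound a) as [ha [Ha0 [Ha1 Ha2]]].
  destruct (h_bound b) as [hb [Hb0 [Hb1 Hb2]]].
  eapply bnd_mono.
  - apply (conv (repeat (/2) a) ha Ha2 (S b)).
    intros m Hm. unfold Dop, sh. destruct m; [lia|]. rewrite !bb_supp by lia. ring.
  - specialize (Hb2 (S b)).
    assert (INR (2*a) <= INR n <= INR (2*a+1)) by (split; apply le_INR; lia).
    assert (INR b = INR n - INR a) by (unfold b; rewrite minus_INR; [ring|lia]).
    rewrite plus_INR, mult_INR in *. change (INR 2) with 2 in *. simpl INR in *.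
    pose proof (pos_INR a).
    apply Rle_trans with (ha * hb); [nra|].
    apply (Rmult_le_reg_r (INR n + 1)); [lra|].
    replace (16 / (INR n + 1) * (INR n + 1)) with 16 by (field; lra).
    assert (ha * ha * (INR n + 1) <= 16) by nra.
    assert (hb * hb * (INR n + 1) <= 16) by nra.
    assert (ha * hb <= (ha * ha + hb * hb) / 2) by (pose proof (Rle_0_sqr (ha - hb)); unfold Rsqr in *; lra).
    nra.
Qed.

Definition sumL (l : list R) : R := fold_right Rplus 0 l.
Definition Ex (y : list R) (phi : nat -> R) : R :=
  sum_f_R0 (fun N => Pl y N * phi N) (length y).

Lemma sum_peel K (f : nat -> R) : sum_f_R0 f (S K) = f O + sum_f_R0 (fun m => f (S m)) K.
Proof.
  induction K.
  - simpl; ring.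
  - change (sum_f_R0 f (S (S K))) with (sum_f_R0 f (S K) + f (S (S K))).
    rewrite IHK. simpl. ring.
Qed.

Lemma sum_lin n a b (f g : nat -> R) :
  sum_f_R0 (fun N => a * f N + b * g N) n = a * sum_f_R0 f n + b * sum_f_R0 g n.
Proof. induction n; simpl; [ring|]. rewrite IHn; ring. Qed.

Lemma sum_ext n (f g : nat -> R) : (forall N, (N <= n)%nat -> f N = g N) -> sum_f_R0 f n = sum_f_R0 g n.
Proof. intros H; induction n; simpl; rewrite H by lia; [auto|]. rewrite IHn; auto. Qed.

Lemma sum_le n (f g : nat -> R) : (forall N, (N <= n)%nat -> f N <= g N) -> sum_f_R0 f n <= sum_f_R0 g n.
Proof. intros H; induction n; simpl; [apply H; lia|]. pose proof (H (S n) ltac:(lia)). pose proof (IHn ltac:(intros; apply H; lia)). lra. Qed.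

Lemma Ex_cons s y phi :
  Ex (s :: y) phi = (1 - s) * Ex y phi + s * Ex y (fun N => phi (S N)).
Proof.
  unfold Ex. simpl length. rewrite Pl_cons. unfold Bop.
  transitivity (sum_f_R0 (fun N => (1 - s) * (Pl y N * phi N) + s * (sh (Pl y) N * phi N)) (S (length y))).
  { apply sum_ext; intros; ring. }
  rewrite sum_lin. f_equal.
  - f_equal. simpl. rewrite (Pl_supp y (S (length y))) by lia. ring.
  - f_equal. rewrite sum_peel. simpl. ring_simplify. reflexivity.
Qed.

Lemma Ex_lin y a b phi psi : Ex y (fun N => a * phi N + b * psi N) = a * Ex y phi + b * Ex y psi.
Proof.
  unfold Ex. rewrite <- sum_lin. apply sum_ext; intros; ring.
Qed.

Lemma Ex_ext y phi psi : (forall N, phi N = psi N) -> Ex y phi = Ex y psi.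
Proof. intros H; unfold Ex; apply sum_ext; intros; rewrite H; auto. Qed.

Lemma Ex_le y phi psi : probs y -> (forall N, phi N <= psi N) -> Ex y phi <= Ex y psi.
Proof.
  intros Hy H; unfold Ex; apply sum_le; intros.
  pose proof (Pl_nonneg y N Hy). specialize (H N). nra.
Qed.

Lemma Ex_1 y : Ex y (fun _ => 1) = 1.
Proof.
  induction y as [|s y IH]. { unfold Ex; simpl. ring. }
  rewrite Ex_cons, IH. ring.
Qed.

Lemma Ex_N y : Ex y INR = sumL y.
Proof.
  induction y as [|s y IH]. { unfold Ex; simpl. ring. }
  rewrite Ex_cons, IH.
  rewrite (Ex_ext y (fun N => INR (S N)) (fun N => 1 * INR N + 1 * 1)) by (intros; rewrite S_INR; ring).
  rewrite Ex_lin, Ex_1, IH. simpl. ring.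
Qed.

Definition varL (l : list R) : R := sumL (map (fun s => s * (1 - s)) l).

Lemma Ex_N2 y : Ex y (fun N => INR N * INR N) = sumL y * sumL y + varL y.
Proof.
  induction y as [|s y IH]. { unfold Ex, varL; simpl. ring. }
  rewrite Ex_cons, IH.
  rewrite (Ex_ext y (fun N => INR (S N) * INR (S N))
     (fun N => 1 * (INR N * INR N) + 1 * (2 * INR N + 1))) by (intros; rewrite S_INR; ring).
  rewrite Ex_lin, IH.
  rewrite (Ex_ext y (fun N => 2 * INR N + 1) (fun N => 2 * INR N + 1 * 1)) by (intros; ring).
  rewrite Ex_lin, Ex_1, Ex_N. unfold varL; simpl. fold (varL y). ring.
Qed.

Definition rmin (x : R) : R := Rmin x (1 - x).
Definition sval (y : list R) : list R := map (fun x => 2 * rmin x) y.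
Definition mu (y : list R) : R := sumL (map rmin y).

Lemma rmin_bounds x : 0 <= x <= 1 -> 0 <= 2 * rmin x <= 1.
Proof. unfold rmin, Rmin; destruct (Rle_dec x (1 - x)); lra. Qed.

Lemma sval_probs y : probs y -> probs (sval y).
Proof. intros H; induction H; constructor; auto; apply rmin_bounds; auto. Qed.

Lemma Bop_mix x F : 0 <= x <= 1 ->
  Bop x F = vadd (vscal (1 - 2 * rmin x) (if Rle_dec x (1 - x) then F else sh F))
                 (vscal (2 * rmin x) (Bop (/2) F)).
Proof.
  intros Hx. apply functional_extensionality; intros m.
  unfold rmin, Rmin. destruct (Rle_dec x (1 - x)); unfold vadd, vscal, Bop; field.
Qed.

Lemma D2_sh F : Dop (Dop (sh F)) = sh (Dop (Dop F)).
Proof. rewrite !sh_Dop; auto. Qed.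

Lemma mixture y : probs y -> forall j,
  bnd (Dop (Dop (Tl y (bb j)))) (Ex (sval y) (fun N => 16 / (INR (N + j) + 1))).
Proof.
  induction 1 as [|x y Hx Hy IH]; intros j.
  - unfold Ex; simpl. replace (Pl [] O) with 1 by reflexivity. rewrite Rmult_1_l. apply D2_bb.
  - simpl Tl. rewrite (Bop_mix x _ Hx). rewrite !Dop_add, !Dop_scal, <- Tl_Bop, <- bb_S.
    unfold sval. rewrite map_cons. fold (sval y). rewrite Ex_cons.
    pose proof (rmin_bounds x Hx).
    eapply bnd_mono; [apply bnd_add; apply bnd_scal|].
    + destruct (Rle_dec x (1 - x)); [apply IH| rewrite D2_sh; apply bnd_sh, IH].
    + apply IH.
    + rewrite !Rabs_right by lra.
      rewrite (Ex_ext (sval y) (fun N => 16 / (INR (S N + j) + 1)) (fun N => 16 / (INR (N + S j) + 1)))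
        by (intros; f_equal; f_equal; f_equal; lia).
      lra.
Qed.

Lemma sumL_nonneg l : probs l -> 0 <= sumL l.
Proof. induction 1; simpl; lra. Qed.

Lemma varL_le l : probs l -> varL l <= sumL l.
Proof. induction 1; unfold varL in *; simpl; nra. Qed.

Lemma sumL_sval y : sumL (sval y) = 2 * mu y.
Proof. induction y; unfold sval, mu in *; simpl; [ring|]. rewrite IHy; ring. Qed.

Lemma D2_Pl y : probs y -> 0 < mu y -> bnd (Dop (Dop (Pl y))) (48 / mu y).
Proof.
  intros Hy Hmu. unfold Pl. change delta0 with (bb O).
  eapply bnd_mono; [apply mixture, Hy|].
  set (S := sval y). set (m := sumL S).
  assert (Hm : m = 2 * mu y) by apply sumL_sval.
  assert (HS : probs S) by (apply sval_probs, Hy).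
  assert (Hm0 : 0 < m) by lra.
  apply Rle_trans with (Ex S (fun N => 32 / m + 64 / (m * m) * ((INR N - m) * (INR N - m)))).
  - apply Ex_le; auto. intros N. rewrite Nat.add_0_r. pose proof (pos_INR N).
    destruct (Rle_lt_dec (m / 2) (INR N)).
    + assert (16 / (INR N + 1) <= 32 / m).
      { apply (Rmult_le_reg_r (m * (INR N + 1))); [nra|].
        replace (16 / (INR N + 1) * (m * (INR N + 1))) with (16 * m) by (field; lra).
        replace (32 / m * (m * (INR N + 1))) with (32 * (INR N + 1)) by (field; lra). nra. }
      assert (0 <= 64 / (m * m) * ((INR N - m) * (INR N - m))).
      { apply Rmult_le_pos; [apply Rlt_le; unfold Rdiv; apply Rmult_lt_0_compat; [lra| apply Rinv_0_lt_compat; nra]| exact (Rle_0_sqr _)]. }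
      assert (0 < 32 / m) by (unfold Rdiv; apply Rmult_lt_0_compat; [lra| apply Rinv_0_lt_compat; lra]).
      lra.
    + assert (16 / (INR N + 1) <= 16).
      { apply (Rmult_le_reg_r (INR N + 1)); [lra|].
        replace (16 / (INR N + 1) * (INR N + 1)) with 16 by (field; lra). nra. }
      assert (16 <= 64 / (m * m) * ((INR N - m) * (INR N - m))).
      { apply (Rmult_le_reg_r (m * m)); [nra|].
        replace (64 / (m * m) * ((INR N - m) * (INR N - m)) * (m * m)) with (64 * ((INR N - m) * (INR N - m))) by (field; lra).
        nra. }
      assert (0 < 32 / m) by (unfold Rdiv; apply Rmult_lt_0_compat; [lra| apply Rinv_0_lt_compat; lra]).
      lra.
  - rewrite (Ex_ext S _ (fun N => (32 / m + 64 / (m * m) * (m * m)) * 1 +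
       (64 / (m * m)) * (INR N * INR N + (- 2 * m) * INR N))) by (intros; ring).
    rewrite Ex_lin, Ex_1.
    rewrite (Ex_ext S (fun N => INR N * INR N + - 2 * m * INR N) (fun N => 1 * (INR N * INR N) + (- 2 * m) * INR N))
      by (intros; ring).
    rewrite Ex_lin, Ex_N2, Ex_N. fold m.
    pose proof (varL_le S HS). fold m in H.
    assert (E : 48 / mu y = 96 / m) by (rewrite Hm; field; lra). rewrite E.
    apply Rle_trans with (32 / m + 64 / (m * m) * m); [|right; field; lra].
    replace ((32 / m + 64 / (m * m) * (m * m)) * 1 + 64 / (m * m) * (1 * (m * m + varL S) + -2 * m * m))
      with (32 / m + 64 / (m * m) * varL S) by (field; lra).
    assert (0 < 64 / (m * m)) by (unfold Rdiv; apply Rmult_lt_0_compat; [lra| apply Rinv_0_lt_compat; nra]).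
    nra.
Qed.

Definition fl (kk a : R) : R := IZR (Int_part (kk * a)) / kk.

Lemma fl_props kk a : 0 < kk -> fl kk a <= a /\ a < fl kk a + / kk.
Proof.
  intros Hk. destruct (base_Int_part (kk * a)) as [H1 H2]. unfold fl. split.
  - apply (Rmult_le_reg_r kk); [lra|]. replace (IZR (Int_part (kk * a)) / kk * kk) with (IZR (Int_part (kk * a))) by (field; lra). lra.
  - apply (Rmult_lt_reg_r kk); [lra|].
    replace ((IZR (Int_part (kk * a)) / kk + / kk) * kk) with (IZR (Int_part (kk * a)) + 1) by (field; lra). lra.
Qed.

Lemma fl_nonneg kk a : 0 < kk -> 0 <= a -> 0 <= fl kk a.
Proof.
  intros Hk Ha. destruct (base_Int_part (kk * a)) as [H1 H2]. unfold fl.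
  assert (IZR (-1) < IZR (Int_part (kk * a))) by (replace (IZR (-1)) with (-1) by reflexivity; nra).
  apply lt_IZR in H. assert (0 <= Int_part (kk * a))%Z by lia. apply IZR_le in H0.
  unfold Rdiv; apply Rmult_le_pos; [auto| left; apply Rinv_0_lt_compat; lra].
Qed.

Fixpoint chainG (kk r : R) (l : list R) : list R :=
  match l with
  | [] => []
  | x :: xs => fl kk (x + r) :: chainG kk (x + r - fl kk (x + r)) xs
  end.

Definition Hyb (r : R) (l : list R) : list R :=
  match l with [] => [] | x :: xs => (x + r) :: xs end.

Definition phi (b : bool) (v : R) : R := if b then 1 - v else v.

Definition costf (r : R) (l : list R) : R :=
  match l with [] => 0 | x :: xs => r + x + 2 * sumL xs end.

Lemma perm2 (A B : list R) u v : Permutation (A ++ u :: v :: B) (u :: v :: A ++ B).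
Proof.
  induction A; simpl; auto. eapply perm_trans; [apply perm_skip, IHA|].
  eapply perm_trans; [apply perm_swap|]. apply perm_skip, perm_swap.
Qed.

Lemma perm1 (A B : list R) u : Permutation (A ++ u :: B) (u :: A ++ B).
Proof. apply Permutation_sym, Permutation_middle. Qed.

Lemma mu_app a b : mu (a ++ b) = mu a + mu b.
Proof. unfold mu; rewrite map_app; induction a; simpl; [ring|]. rewrite IHa; ring. Qed.

Lemma mu_nonneg y : probs y -> 0 <= mu y.
Proof. induction 1; unfold mu in *; simpl; [lra|]. pose proof (rmin_bounds x H); lra. Qed.

Lemma sumL_app a b : sumL (a ++ b) = sumL a + sumL b.
Proof. induction a; simpl; [ring|]. unfold sumL in *; simpl. rewrite IHa; ring. Qed.

Lemma rmin_phi b v : rmin (phi b v) = rmin v.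
Proof. destruct b; unfold phi, rmin, Rmin; [|reflexivity]. repeat destruct Rle_dec; lra. Qed.

Lemma mu_phi_lb b l : Forall (fun v => 0 <= v <= 3/4) l -> sumL l / 3 <= mu (map (phi b) l).
Proof.
  induction 1; unfold mu in *; simpl. { unfold sumL; simpl; lra. }
  rewrite rmin_phi. unfold sumL in *; simpl.
  assert (x / 3 <= rmin x) by (unfold rmin, Rmin; destruct (Rle_dec _ _); lra). lra.
Qed.

Lemma phi_probs b l : Forall (fun v => 0 <= v <= 3/4) l -> probs (map (phi b) l).
Proof. induction 1; constructor; auto. destruct b; unfold phi; lra. Qed.

Lemma Forall_q34_app a b : Forall (fun v => 0 <= v <= 3/4) a -> Forall (fun v => 0 <= v <= 3/4) b ->
  Forall (fun v => 0 <= v <= 3/4) (a ++ b).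
Proof. intros; apply Forall_app; auto. Qed.

Lemma probs_app a b : probs a -> probs b -> probs (a ++ b).
Proof. intros; apply Forall_app; auto. Qed.

Lemma low_q34 l : Forall (fun v => 0 <= v <= 1/2) l -> Forall (fun v => 0 <= v <= 3/4) l.
Proof. apply Forall_impl; intros; lra. Qed.

Lemma sumL_nonneg' l : Forall (fun v => 0 <= v <= 3/4) l -> 0 <= sumL l.
Proof. induction 1; unfold sumL in *; simpl; lra. Qed.

Lemma bnd_zero c : 0 <= c -> bnd (vsub (fun _ => 0) (fun _ => 0)) c.
Proof. intros Hc. eapply bnd_ext with (f := vscal 0 delta0); [intros; unfold vscal, vsub; ring|]. eapply bnd_mono; [apply bnd_scal, bnd_delta0|]. rewrite Rabs_R0; lra. Qed.

Lemma CL_inner b kk M s rest : 4 <= kk -> probs rest -> 0 <= M ->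
  (forall Y, probs Y -> (s - 2) / 3 <= mu Y -> bnd (Dop (Dop (Pl Y))) M) ->
  forall l pre r, Forall (fun v => 0 <= v <= 1/2) l -> Forall (fun v => 0 <= v <= 3/4) pre ->
  0 <= r < / kk -> s = sumL pre + r + sumL l ->
  bnd (vsub (Pl (map (phi b) (pre ++ Hyb r l) ++ rest)) (Pl (map (phi b) (pre ++ chainG kk r l) ++ rest)))
      (M * costf r l / kk + 2 / kk).
Proof.
  intros Hk Hrest HM HY l. induction l as [|x l IH]; intros pre r Hl Hpre Hr Hs.
  - simpl. eapply bnd_ext; [|apply (bnd_zero (M * 0 / kk + 2 / kk))].
    + intros; unfold vsub; ring.
    + apply Rplus_le_le_0_compat; [right; field; lra| apply Rlt_le; unfold Rdiv; apply Rmult_lt_0_compat; [lra| apply Rinv_0_lt_compat; lra]].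
  - apply Forall_cons_iff in Hl as Hl0. destruct Hl0 as [Hx Hl'].
    set (a := x + r). set (q := fl kk a). set (r' := a - q).
    assert (Hkp : 0 < kk) by lra.
    destruct (fl_props kk a Hkp) as [Hq1 Hq2]. fold q in Hq1, Hq2.
    assert (Hq0 : 0 <= q) by (apply fl_nonneg; unfold a; lra).
    assert (Hik : / kk <= / 4) by (apply Rinv_le_contravar; lra).
    destruct l as [|x2 xs].
    +
      simpl Hyb. simpl chainG. fold a q.
      rewrite !map_app. simpl map.
      rewrite <- !app_assoc. simpl app.
      rewrite !(Pl_perm _ _ (perm1 _ _ _)), !Pl_cons.
      rewrite Bop_single.
      eapply bnd_mono; [apply bnd_scal, bnd_Dop, bnd_Pl, probs_app; [apply phi_probs; auto| auto]|].
      assert (Rabs (phi b q - phi b a) <= / kk) by (destruct b; unfold phi, Rabs; destruct (Rcase_abs _); lra).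
      simpl costf. unfold sumL; simpl.
      assert (0 <= M * (r + x + 2 * 0) / kk).
      { unfold Rdiv; apply Rmult_le_pos; [nra| left; apply Rinv_0_lt_compat; lra]. }
      unfold Rdiv at 2. lra.
    + pose proof Hl' as Hl''. apply Forall_cons_iff in Hl'' as [Hx2 Hxs].
      assert (Hpre' : Forall (fun v => 0 <= v <= 3/4) (pre ++ [q])).
      { apply Forall_app; split; auto. constructor; auto. unfold a in Hq1. lra. }
      assert (Hr' : 0 <= r' < / kk) by (unfold r'; lra).
      assert (IHb := IH (pre ++ [q]) r' Hl' Hpre' Hr').
      assert (Hs' : s = sumL (pre ++ [q]) + r' + sumL (x2 :: xs)).
      { rewrite Hs, sumL_app. unfold sumL, r', a; simpl. ring. }
      specialize (IHb Hs').
      assert (E2 : pre ++ chainG kk r (x :: x2 :: xs) = (pre ++ [q]) ++ chainG kk r' (x2 :: xs)).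
      { simpl. rewrite <- app_assoc. reflexivity. }
      rewrite E2.
      eapply bnd_mono; [eapply bnd_tri; [|exact IHb]|].
      *
        simpl Hyb. fold a. rewrite !map_app. simpl map. rewrite <- !app_assoc. simpl app.
        rewrite !(Pl_perm _ _ (perm2 _ _ _ _)), !Pl_cons. rewrite Bop_pair.
        2:{ destruct b; unfold phi, r'; ring. }
        rewrite app_assoc, <- map_app.
        apply bnd_scal, HY.
        { apply probs_app; auto. apply phi_probs. apply Forall_app; split; auto. apply low_q34; auto. }
        { rewrite mu_app. pose proof (mu_phi_lb b (pre ++ xs)) as Hmu.
          assert (Forall (fun v => 0 <= v <= 3/4) (pre ++ xs)) by (apply Forall_app; split; auto; apply low_q34; auto).
          specialize (Hmu H). rewrite sumL_app in Hmu.
          pose proof (mu_nonneg rest Hrest).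
          rewrite Hs. change (sumL (x :: x2 :: xs)) with (x + (x2 + sumL xs)).
          lra. }
      * simpl costf.
        assert (Rabs (phi b a * phi b x2 - phi b q * phi b (x2 + r')) <= (q + x2) / kk).
        { assert (E : phi b a * phi b x2 - phi b q * phi b (x2 + r') = r' * (x2 - q))
            by (destruct b; unfold phi, r'; ring).
          rewrite E, Rabs_mult, (Rabs_right r') by lra.
          apply Rle_trans with (r' * (q + x2)).
          - apply Rmult_le_compat_l; [lra|]. unfold Rabs; destruct (Rcase_abs _); lra.
          - unfold Rdiv; rewrite Rmult_comm. apply Rmult_le_compat_l; lra. }
        unfold sumL; simpl. fold (sumL xs).
        assert (M * (q + x2) / kk + M * (r' + x2 + 2 * sumL xs) / kk = M * (r + x + 2 * (x2 + sumL xs)) / kk).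
        { unfold r', a. field. lra. }
        assert (Rabs (phi b a * phi b x2 - phi b q * phi b (x2 + r')) * M <= M * (q + x2) / kk).
        { replace (M * (q + x2) / kk) with ((q + x2) / kk * M) by (field; lra). apply Rmult_le_compat_r; lra. }
        lra.
Qed.

Lemma costf_le r l : 0 <= r -> Forall (fun v => 0 <= v <= 1/2) l -> costf r l <= r + 2 * sumL l.
Proof.
  intros Hr Hl. destruct Hl as [|x l Hx Hl]; simpl; [unfold sumL; simpl; lra|].
  unfold sumL; simpl. fold (sumL l). lra.
Qed.

Lemma sumL_low l : Forall (fun v => 0 <= v <= 1/2) l -> 0 <= sumL l.
Proof. induction 1; unfold sumL in *; simpl; lra. Qed.

Lemma CL b kk rest l pre r : 4 <= kk -> probs rest -> Forall (fun v => 0 <= v <= 1/2) l ->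
  Forall (fun v => 0 <= v <= 3/4) pre -> 0 <= r < / kk ->
  bnd (vsub (Pl (map (phi b) (pre ++ Hyb r l) ++ rest)) (Pl (map (phi b) (pre ++ chainG kk r l) ++ rest)))
      (600 / kk).
Proof.
  intros Hk Hrest Hl Hpre Hr.
  set (s := sumL pre + r + sumL l).
  pose proof (costf_le r l (proj1 Hr) Hl) as Hc.
  pose proof (sumL_nonneg' pre Hpre). pose proof (sumL_low l Hl).
  assert (Hc0 : 0 <= costf r l).
  { destruct Hl; simpl; [lra|]. pose proof (sumL_low l Hl); lra. }
  assert (Hcs : costf r l <= 2 * s) by (unfold s; lra).
  destruct (Rle_lt_dec s 6) as [Hs|Hs].
  - eapply bnd_mono; [apply (CL_inner b kk 4 s rest Hk Hrest ltac:(lra)); auto|].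
    + intros Y HY _. eapply bnd_mono; [apply bnd_Dop, bnd_Dop, bnd_Pl, HY|]. lra.
    + assert (4 * costf r l <= 598) by lra.
      unfold Rdiv. rewrite <- Rmult_plus_distr_r. apply Rmult_le_compat_r; [left; apply Rinv_0_lt_compat; lra|]. lra.
  - eapply bnd_mono; [apply (CL_inner b kk (288 / s) s rest Hk Hrest); auto|].
    + left; unfold Rdiv; apply Rmult_lt_0_compat; [lra| apply Rinv_0_lt_compat; lra].
    + intros Y HY Hmu. assert (Hm : 0 < mu Y) by lra.
      eapply bnd_mono; [apply D2_Pl; auto|].
      apply (Rmult_le_reg_r (mu Y * s)); [nra|].
      replace (48 / mu Y * (mu Y * s)) with (48 * s) by (field; lra).
      replace (288 / s * (mu Y * s)) with (288 * mu Y) by (field; lra). lra.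
    + assert (288 / s * costf r l <= 576).
      { apply (Rmult_le_reg_r s); [lra|]. replace (288 / s * costf r l * s) with (288 * costf r l) by (field; lra). lra. }
      apply Rle_trans with ((288 / s * costf r l + 2) / kk); [right; field; lra|].
      unfold Rdiv. apply Rmult_le_compat_r; [left; apply Rinv_0_lt_compat; lra|]. lra.
Qed.

Definition lowb (x : R) : bool := if Rle_dec x (1/2) then true else false.
Definition lowpart (p : list R) : list R := filter lowb p.
Definition highy (p : list R) : list R := map (phi true) (filter (fun x => negb (lowb x)) p).

Fixpoint chain2 (kk rL rH : R) (p : list R) : list R :=
  match p with
  | [] => []
  | x :: xs =>
    if Rle_dec x (1/2) then fl kk (x + rL) :: chain2 kk (x + rL - fl kk (x + rL)) rH xs
    else (1 - fl kk (1 - x + rH)) :: chain2 kk rL (1 - x + rH - fl kk (1 - x + rH)) xs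
  end.

Lemma phiT_invol x : phi true (phi true x) = x.
Proof. unfold phi; ring. Qed.

Lemma map_phiF l : map (phi false) l = l.
Proof. induction l; simpl; auto. rewrite IHl; auto. Qed.

Lemma lowpart_cons_low x xs : x <= 1/2 -> lowpart (x :: xs) = x :: lowpart xs.
Proof. intros H; unfold lowpart, lowb; simpl; destruct (Rle_dec x (1/2)); [auto|lra]. Qed.
Lemma lowpart_cons_high x xs : ~ x <= 1/2 -> lowpart (x :: xs) = lowpart xs.
Proof. intros H; unfold lowpart, lowb; simpl; destruct (Rle_dec x (1/2)); [lra|auto]. Qed.
Lemma highy_cons_low x xs : x <= 1/2 -> highy (x :: xs) = highy xs.
Proof. intros H; unfold highy, lowb; simpl; destruct (Rle_dec x (1/2)); [auto|lra]. Qed.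
Lemma highy_cons_high x xs : ~ x <= 1/2 -> highy (x :: xs) = (1 - x) :: highy xs.
Proof. intros H; unfold highy, lowb; simpl; destruct (Rle_dec x (1/2)); [lra|auto]. Qed.

Lemma perm_split p : Permutation p (lowpart p ++ map (phi true) (highy p)).
Proof.
  induction p as [|x xs IH]; [simpl; auto|].
  destruct (Rle_dec x (1/2)) as [H|H].
  - rewrite lowpart_cons_low, highy_cons_low by auto. simpl. apply perm_skip, IH.
  - rewrite lowpart_cons_high, highy_cons_high by auto. simpl map.
    try replace (1 - (1 - x)) with x by ring; try replace (phi true (1 - x)) with x by (unfold phi; ring).
    eapply perm_trans; [apply perm_skip, IH|]. apply Permutation_middle.
Qed.

Lemma chain2_perm kk p : forall rL rH, Permutation (chain2 kk rL rH p)
  (chainG kk rL (lowpart p) ++ map (phi true) (chainG kk rH (highy p))).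
Proof.
  induction p as [|x xs IH]; intros rL rH; [simpl; auto|].
  simpl chain2. destruct (Rle_dec x (1/2)) as [H|H].
  - rewrite lowpart_cons_low, highy_cons_low by auto. simpl chainG. simpl app. apply perm_skip, IH.
  - rewrite lowpart_cons_high, highy_cons_high by auto. simpl chainG. simpl map.
    eapply perm_trans; [apply perm_skip, IH|]. apply Permutation_middle.
Qed.

Lemma remove_nth_0 (x : R) l : remove_nth 0 (x :: l) = l.
Proof. reflexivity. Qed.
Lemma remove_nth_S (x : R) j l : remove_nth (S j) (x :: l) = x :: remove_nth j l.
Proof. reflexivity. Qed.

Lemma length_chainG kk r l : length (chainG kk r l) = length l.
Proof. revert r; induction l; intros; simpl; auto. Qed.

Lemma rem_decomp kk p : forall j rL rH, (j < length p)%nat ->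
  (exists j', (j' < length (lowpart p))%nat /\
     Permutation (remove_nth j p) (remove_nth j' (lowpart p) ++ map (phi true) (highy p)) /\
     Permutation (remove_nth j (chain2 kk rL rH p))
       (remove_nth j' (chainG kk rL (lowpart p)) ++ map (phi true) (chainG kk rH (highy p)))) \/
  (exists j', (j' < length (highy p))%nat /\
     Permutation (remove_nth j p) (lowpart p ++ map (phi true) (remove_nth j' (highy p))) /\
     Permutation (remove_nth j (chain2 kk rL rH p))
       (chainG kk rL (lowpart p) ++ map (phi true) (remove_nth j' (chainG kk rH (highy p))))).
Proof.
  induction p as [|x xs IH]; intros j rL rH Hj; [simpl in Hj; lia|].
  simpl chain2. destruct (Rle_dec x (1/2)) as [H|H].
  - rewrite lowpart_cons_low, highy_cons_low by auto. simpl chainG.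
    destruct j as [|j].
    + left. exists O. split; [simpl; lia|]. rewrite !remove_nth_0. split; [apply perm_split|apply chain2_perm].
    + simpl in Hj. destruct (IH j (x + rL - fl kk (x + rL)) rH ltac:(lia)) as [[j' [Hj' [P1 P2]]]|[j' [Hj' [P1 P2]]]].
      * left. exists (S j'). split; [simpl; lia|]. rewrite !remove_nth_S. split; simpl; apply perm_skip; auto.
      * right. exists j'. split; auto. rewrite !remove_nth_S. split; simpl; apply perm_skip; auto.
  - rewrite lowpart_cons_high, highy_cons_high by auto. simpl chainG.
    destruct j as [|j].
    + right. exists O. split; [simpl; lia|]. rewrite !remove_nth_0. split; [apply perm_split|apply chain2_perm].
    + simpl in Hj. destruct (IH j rL (1 - x + rH - fl kk (1 - x + rH)) ltac:(lia)) as [[j' [Hj' [P1 P2]]]|[j' [Hj' [P1 P2]]]].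
      * left. exists j'. split; auto. rewrite !remove_nth_S. simpl map.
        try replace (1 - (1 - x)) with x by ring; try replace (phi true (1 - x)) with x by (unfold phi; ring).
        split; (eapply perm_trans; [apply perm_skip; eauto|]); apply Permutation_middle.
      * right. exists (S j'). split; [simpl; lia|]. rewrite !remove_nth_S. simpl map.
        try replace (1 - (1 - x)) with x by ring; try replace (phi true (1 - x)) with x by (unfold phi; ring).
        split; (eapply perm_trans; [apply perm_skip; eauto|]); apply Permutation_middle.
Qed.

Fixpoint carryG (kk r : R) (l : list R) : R :=
  match l with [] => r | x :: xs => carryG kk (x + r - fl kk (x + r)) xs end.

Lemma chainG_app kk A B : forall r, chainG kk r (A ++ B) = chainG kk r A ++ chainG kk (carryG kk r A) B.
Proof. induction A; intros r; simpl; auto. rewrite IHA; auto. Qed.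

Lemma carry_bound kk r l : 0 < kk -> 0 <= r < / kk -> 0 <= carryG kk r l < / kk.
Proof.
  revert r; induction l; intros r Hk Hr; simpl; auto.
  apply IHl; auto. destruct (fl_props kk (a + r) Hk); lra.
Qed.

Lemma chainG_q34 kk r l : 4 <= kk -> 0 <= r < / kk -> Forall (fun v => 0 <= v <= 1/2) l ->
  Forall (fun v => 0 <= v <= 3/4) (chainG kk r l).
Proof.
  intros Hk Hr Hl; revert r Hr; induction Hl as [|x l Hx Hl IH]; intros r Hr; simpl; constructor.
  - assert (Hkp : 0 < kk) by lra. destruct (fl_props kk (x + r) Hkp).
    pose proof (fl_nonneg kk (x + r) Hkp ltac:(lra)).
    assert (/ kk <= / 4) by (apply Rinv_le_contravar; lra). lra.
  - apply IH. assert (Hkp : 0 < kk) by lra. destruct (fl_props kk (x + r) Hkp); lra.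
Qed.

Lemma Forall_remove {A} (P : A -> Prop) j l : Forall P l -> Forall P (remove_nth j l).
Proof.
  revert j; induction l as [|x l IH]; intros j H.
  - destruct j; unfold remove_nth; simpl; auto.
  - inversion H; subst. destruct j; [exact H3|]. unfold remove_nth in *. simpl. constructor; auto.
Qed.

Lemma remove_nth_map (f : R -> R) j l : remove_nth j (map f l) = map f (remove_nth j l).
Proof.
  revert j; induction l as [|x l IH]; intros j.
  - destruct j; reflexivity.
  - destruct j; [reflexivity|]. unfold remove_nth in *. simpl. rewrite IH; auto.
Qed.

Lemma remove_nth_mid (A : list R) x B : remove_nth (length A) (A ++ x :: B) = A ++ B.
Proof. induction A; [reflexivity|]. simpl length. simpl app. rewrite remove_nth_S, IHA; auto. Qed.

Lemma bnd_sym f g c : bnd (vsub f g) c -> bnd (vsub g f) c.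
Proof.
  intros H. eapply bnd_ext with (f := vscal (-1) (vsub f g)); [intros; unfold vscal, vsub; ring|].
  eapply bnd_mono; [apply bnd_scal, H|]. rewrite Rabs_m1; lra.
Qed.

Lemma Hyb0 l : Hyb 0 l = l.
Proof. destruct l; simpl; auto. rewrite Rplus_0_r; auto. Qed.

Lemma Hyb_swap b kk rest pre r r' B : 4 <= kk -> probs rest -> Forall (fun v => 0 <= v <= 1/2) B ->
  Forall (fun v => 0 <= v <= 3/4) pre -> 0 <= r < / kk -> 0 <= r' < / kk ->
  bnd (vsub (Pl (map (phi b) (pre ++ Hyb r B) ++ rest)) (Pl (map (phi b) (pre ++ Hyb r' B) ++ rest))) (2 / kk).
Proof.
  intros Hk Hrest HB Hpre Hr Hr'.
  destruct B as [|y B].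
  - simpl. eapply bnd_ext; [|apply (bnd_zero (2 / kk))]; [intros; unfold vsub; ring|].
    left; unfold Rdiv; apply Rmult_lt_0_compat; [lra| apply Rinv_0_lt_compat; lra].
  - simpl Hyb. rewrite !map_app. simpl map. rewrite <- !app_assoc. simpl app.
    rewrite !(Pl_perm _ _ (perm1 _ _ _)), !Pl_cons, Bop_single.
    apply Forall_cons_iff in HB as [Hy HB].
    assert (HP : probs (map (phi b) pre ++ map (phi b) B ++ rest)).
    { rewrite app_assoc, <- map_app; apply probs_app; [apply phi_probs; apply Forall_app; split; auto; apply low_q34; auto| auto]. }
    eapply bnd_mono; [apply bnd_scal, bnd_Dop, bnd_Pl, HP|].
    assert (Rabs (phi b (y + r') - phi b (y + r)) <= / kk) by (destruct b; unfold phi, Rabs; destruct (Rcase_abs _); lra).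
    unfold Rdiv. lra.
Qed.

Lemma HL b kk rest l j : 4 <= kk -> probs rest -> Forall (fun v => 0 <= v <= 1/2) l -> (j < length l)%nat ->
  bnd (vsub (Pl (map (phi b) (remove_nth j l) ++ rest)) (Pl (map (phi b) (remove_nth j (chainG kk 0 l)) ++ rest)))
      (1802 / kk).
Proof.
  intros Hk Hrest Hl Hj.
  assert (Hkp : 0 < kk) by lra.
  assert (H0k : 0 <= 0 < / kk) by (split; [lra| apply Rinv_0_lt_compat; lra]).
  destruct (nth_split l 0 Hj) as [A [B [El HA]]].
  set (x := nth j l 0) in El.
  rewrite El in Hl |- *. rewrite <- HA, remove_nth_mid.
  rewrite chainG_app. simpl chainG.
  rewrite <- (length_chainG kk 0 A), remove_nth_mid.
  apply Forall_app in Hl as [HlA HlB]. apply Forall_cons_iff in HlB as [Hx HB].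
  set (rho := carryG kk 0 A).
  set (q := fl kk (x + rho)). set (rho' := x + rho - q).
  assert (Hrho : 0 <= rho < / kk) by (apply carry_bound; auto).
  assert (Hrho' : 0 <= rho' < / kk) by (unfold rho', q; destruct (fl_props kk (x + rho) Hkp); lra).
  assert (HcA : Forall (fun v => 0 <= v <= 3/4) (chainG kk 0 A)) by (apply chainG_q34; auto).
  replace (1802 / kk) with (600 / kk + (600 / kk + (2 / kk + 600 / kk))) by (field; lra).
  eapply bnd_tri.
  { pose proof (CL b kk rest (A ++ B) [] 0 Hk Hrest ltac:(apply Forall_app; auto) (Forall_nil _) H0k) as T1.
    simpl app in T1. rewrite Hyb0, chainG_app in T1. exact T1. }
  fold rho. eapply bnd_tri.
  { apply bnd_sym. apply (CL b kk rest B (chainG kk 0 A) rho Hk Hrest HB HcA Hrho). }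
  eapply bnd_tri.
  { apply (Hyb_swap b kk rest (chainG kk 0 A) rho rho' B Hk Hrest HB HcA Hrho Hrho'). }
  apply (CL b kk rest B (chainG kk 0 A) rho' Hk Hrest HB HcA Hrho').
Qed.

Definition Qp (kk x q : R) : Prop := Rabs (q - x) <= / kk /\ 0 <= q <= 1 /\ exists m : Z, q = IZR m / kk.

Lemma fl_le1 k a : (0 < k)%nat -> 0 <= a < 1 + / INR k -> fl (INR k) a <= 1.
Proof.
  intros Hk Ha. assert (Hkp : 0 < INR k) by (apply lt_0_INR; auto).
  destruct (base_Int_part (INR k * a)) as [H1 H2]. unfold fl.
  assert (INR k * a < INR k + 1).
  { replace (INR k + 1) with (INR k * (1 + / INR k)) by (field; lra). apply Rmult_lt_compat_l; lra. }
  assert (IZR (Int_part (INR k * a)) < IZR (Z.of_nat k + 1)).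
  { rewrite plus_IZR, <- INR_IZR_INZ. simpl. lra. }
  apply lt_IZR in H0. assert (Int_part (INR k * a) <= Z.of_nat k)%Z by lia.
  apply IZR_le in H3. rewrite <- INR_IZR_INZ in H3.
  apply (Rmult_le_reg_r (INR k)); [lra|].
  replace (IZR (Int_part (INR k * a)) / INR k * INR k) with (IZR (Int_part (INR k * a))) by (field; lra). lra.
Qed.

Lemma chain2_props k p : (0 < k)%nat -> probs p -> forall rL rH,
  0 <= rL < / INR k -> 0 <= rH < / INR k ->
  Forall2 (Qp (INR k)) p (chain2 (INR k) rL rH p).
Proof.
  intros Hk Hp. assert (Hkp : 0 < INR k) by (apply lt_0_INR; auto).
  induction Hp as [|x xs Hx Hxs IH]; intros rL rH HrL HrH; simpl; [constructor|].
  destruct (Rle_dec x (1/2)) as [H|H].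
  - destruct (fl_props (INR k) (x + rL) Hkp).
    pose proof (fl_nonneg (INR k) (x + rL) Hkp ltac:(lra)).
    assert (/ INR k <= 1) by (rewrite <- Rinv_1; apply Rinv_le_contravar; [lra|]; apply (le_INR 1); lia).
    constructor.
    + split; [unfold Rabs; destruct (Rcase_abs _); lra|]. split.
      * split; auto. apply fl_le1; auto; lra.
      * exists (Int_part (INR k * (x + rL))). reflexivity.
    + apply IH; auto. lra.
  - destruct (fl_props (INR k) (1 - x + rH) Hkp).
    pose proof (fl_nonneg (INR k) (1 - x + rH) Hkp ltac:(lra)).
    assert (/ INR k <= 1) by (rewrite <- Rinv_1; apply Rinv_le_contravar; [lra|]; apply (le_INR 1); lia).
    constructor.
    + split; [unfold Rabs; destruct (Rcase_abs _); lra|]. split.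
      * assert (fl (INR k) (1 - x + rH) <= 1) by (apply fl_le1; auto; lra). lra.
      * exists (Z.of_nat k - Int_part (INR k * (1 - x + rH)))%Z. unfold fl.
        rewrite minus_IZR, <- INR_IZR_INZ. field. lra.
    + apply IH; auto. lra.
Qed.

Lemma Forall2_nth' {A B} (R0 : A -> B -> Prop) l1 l2 d1 d2 i :
  Forall2 R0 l1 l2 -> (i < length l1)%nat -> R0 (nth i l1 d1) (nth i l2 d2).
Proof.
  intros H; revert i; induction H; intros i Hi; simpl in *; [lia|].
  destruct i; auto. apply IHForall2; lia.
Qed.

Lemma Forall2_probs kk p q : Forall2 (Qp kk) p q -> probs q.
Proof. induction 1; constructor; auto. destruct H as [_ [H _]]; auto. Qed.

Lemma lowpart_low p : probs p -> Forall (fun v => 0 <= v <= 1/2) (lowpart p).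
Proof.
  intros H; apply Forall_forall; intros x Hx. unfold lowpart in Hx. apply filter_In in Hx as [Hx Hl].
  unfold probs in H; rewrite Forall_forall in H. specialize (H x Hx). unfold lowb in Hl. destruct (Rle_dec x (1/2)); [lra|discriminate].
Qed.

Lemma highy_low p : probs p -> Forall (fun v => 0 <= v <= 1/2) (highy p).
Proof.
  intros H; apply Forall_forall; intros y Hy. unfold highy in Hy. apply in_map_iff in Hy as [x [<- Hx]].
  apply filter_In in Hx as [Hx Hl].
  unfold probs in H; rewrite Forall_forall in H. specialize (H x Hx). unfold lowb in Hl. unfold phi.
  destruct (Rle_dec x (1/2)); [discriminate|lra].
Qed.

Lemma q34_probs l : Forall (fun v => 0 <= v <= 3/4) l -> probs l.
Proof. apply Forall_impl; intros; lra. Qed.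

Lemma low_phiT_probs l : Forall (fun v => 0 <= v <= 1/2) l -> probs (map (phi true) l).
Proof. intros; apply phi_probs, low_q34; auto. Qed.

Lemma tv_main k p : (4 <= k)%nat -> probs p ->
  bnd (vsub (Pl p) (Pl (chain2 (INR k) 0 0 p))) (1200 / INR k).
Proof.
  intros Hk Hp. set (kk := INR k).
  assert (Hkk : 4 <= kk) by (unfold kk; replace 4 with (INR 4) by (simpl; ring); apply le_INR; auto).
  assert (H0k : 0 <= 0 < / kk) by (split; [lra| apply Rinv_0_lt_compat; lra]).
  rewrite (Pl_perm _ _ (perm_split p)), (Pl_perm _ _ (chain2_perm kk p 0 0)).
  pose proof (lowpart_low p Hp) as HLo. pose proof (highy_low p Hp) as HH.
  replace (1200 / kk) with (600 / kk + 600 / kk) by (field; lra).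
  eapply bnd_tri.
  - pose proof (CL false kk (map (phi true) (highy p)) (lowpart p) [] 0 Hkk (low_phiT_probs _ HH) HLo (Forall_nil _) H0k) as T.
    simpl app in T. rewrite Hyb0, !map_phiF in T. exact T.
  - rewrite (Pl_perm (chainG kk 0 (lowpart p) ++ _) _ (Permutation_app_comm _ _)).
    rewrite (Pl_perm (chainG kk 0 (lowpart p) ++ _) _ (Permutation_app_comm _ _)).
    pose proof (CL true kk (chainG kk 0 (lowpart p)) (highy p) [] 0 Hkk
      (q34_probs _ (chainG_q34 _ _ _ Hkk H0k HLo)) HH (Forall_nil _) H0k) as T.
    simpl app in T. rewrite Hyb0 in T. exact T.
Qed.

Lemma tv_loo k p j : (4 <= k)%nat -> probs p -> (j < length p)%nat ->
  bnd (vsub (Pl (remove_nth j p)) (Pl (remove_nth j (chain2 (INR k) 0 0 p)))) (2402 / INR k).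
Proof.
  intros Hk Hp Hj. set (kk := INR k).
  assert (Hkk : 4 <= kk) by (unfold kk; replace 4 with (INR 4) by (simpl; ring); apply le_INR; auto).
  assert (H0k : 0 <= 0 < / kk) by (split; [lra| apply Rinv_0_lt_compat; lra]).
  pose proof (lowpart_low p Hp) as HLo. pose proof (highy_low p Hp) as HH.
  replace (2402 / kk) with (1802 / kk + 600 / kk) by (field; lra).
  destruct (rem_decomp kk p j 0 0 Hj) as [[j' [Hj' [P1 P2]]]|[j' [Hj' [P1 P2]]]];
    rewrite (Pl_perm _ _ P1), (Pl_perm _ _ P2).
  - eapply bnd_tri.
    + pose proof (HL_lemma := HL false kk (map (phi true) (highy p)) (lowpart p) j' Hkk (low_phiT_probs _ HH) HLo Hj').
      rewrite !map_phiF in HL_lemma. exact HL_lemma.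
    + rewrite (Pl_perm (remove_nth j' (chainG kk 0 (lowpart p)) ++ _) _ (Permutation_app_comm _ _)).
      rewrite (Pl_perm (remove_nth j' (chainG kk 0 (lowpart p)) ++ _) _ (Permutation_app_comm _ _)).
      pose proof (CL true kk (remove_nth j' (chainG kk 0 (lowpart p))) (highy p) [] 0 Hkk
        (Forall_remove _ _ _ (q34_probs _ (chainG_q34 _ _ _ Hkk H0k HLo))) HH (Forall_nil _) H0k) as T.
      simpl app in T. rewrite Hyb0 in T. exact T.
  - rewrite Rplus_comm. eapply bnd_tri.
    + pose proof (CL false kk (map (phi true) (remove_nth j' (highy p))) (lowpart p) [] 0 Hkk
        (low_phiT_probs _ (Forall_remove _ j' _ HH)) HLo (Forall_nil _) H0k) as T.
      simpl app in T. rewrite Hyb0, !map_phiF in T. exact T.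
    + rewrite (Pl_perm (chainG kk 0 (lowpart p) ++ _) _ (Permutation_app_comm _ _)).
      rewrite (Pl_perm (chainG kk 0 (lowpart p) ++ _) _ (Permutation_app_comm _ _)).
      apply (HL true kk (chainG kk 0 (lowpart p)) (highy p) j' Hkk
        (q34_probs _ (chainG_q34 _ _ _ Hkk H0k HLo)) HH Hj').
Qed.

Lemma tv_le1 p q : probs p -> probs q -> tv_indsum p q <= 1.
Proof.
  intros Hp Hq. pose proof (tv_bnd p q 2 ltac:(eapply bnd_mono; [apply bnd_sub; apply bnd_Pl; eauto|]; lra)). lra.
Qed.

Lemma final_bound k X t : (0 < k)%nat -> 0 <= X <= 3000 -> t <= 1 -> ((4 <= k)%nat -> t <= X / INR k) ->
  t <= 3000 / sqrt (INR k).
Proof.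
  intros Hk HX Ht H.
  assert (Hkp : 1 <= INR k) by (apply (le_INR 1); lia).
  assert (Hs : 1 <= sqrt (INR k)) by (rewrite <- sqrt_1; apply sqrt_le_1_alt; lra).
  assert (Hss : sqrt (INR k) * sqrt (INR k) = INR k) by (apply sqrt_sqrt; lra).
  destruct (Nat.lt_ge_cases k 4) as [Hl|Hl].
  - assert (INR k <= 3) by (replace 3 with (INR 3) by (simpl; ring); apply le_INR; lia).
    assert (sqrt (INR k) <= 2) by nra.
    apply Rle_trans with 1; auto.
    apply (Rmult_le_reg_r (sqrt (INR k))); [lra|].
    replace (3000 / sqrt (INR k) * sqrt (INR k)) with 3000 by (field; lra). lra.
  - specialize (H Hl). eapply Rle_trans; [exact H|].
    set (s := sqrt (INR k)) in *. rewrite <- Hss.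
    apply (Rmult_le_reg_r (s * s)); [nra|].
    replace (X / (s * s) * (s * s)) with X by (field; lra).
    replace (3000 / s * (s * s)) with (3000 * s) by (field; lra).
    nra.
Qed.

Theorem theorem2 :
  exists C : R, 0 < C /\
  forall (n k : nat) (p : list R),
    (0 < n)%nat -> (0 < k)%nat -> length p = n ->
    Forall (fun x => 0 <= x <= 1) p ->
    exists q : list R,
      length q = n /\
      Forall (fun x => 0 <= x <= 1) q /\
      (forall i, (i < n)%nat -> Rabs (nth i q 0 - nth i p 0) <= C / INR k) /\
      (forall i, (i < n)%nat -> exists m : Z, nth i q 0 = IZR m / INR k) /\
      tv_indsum p q <= C / sqrt (INR k) /\
      (forall j, (j < n)%nat ->
         tv_indsum (remove_nth j p) (remove_nth j q) <= C / sqrt (INR k)).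
Proof.
  exists 3000. split; [lra|].
  intros n k p Hn Hk Hlen Hp.
  assert (Hkp : 0 < INR k) by (apply lt_0_INR; auto).
  assert (H0k : 0 <= 0 < / INR k) by (split; [lra| apply Rinv_0_lt_compat; lra]).
  pose proof (chain2_props k p Hk Hp 0 0 H0k H0k) as HF.
  set (q := chain2 (INR k) 0 0 p) in *.
  assert (Hq : probs q) by (eapply Forall2_probs; eauto).
  exists q. repeat split.
  - rewrite <- Hlen. symmetry. eapply Forall2_length; eauto.
  - exact Hq.
  - intros i Hi. destruct (Forall2_nth' _ p q 0 0 i HF ltac:(lia)) as [H1 _].
    eapply Rle_trans; [exact H1|]. unfold Rdiv. rewrite <- (Rmult_1_l (/ INR k)) at 1.
    apply Rmult_le_compat_r; [left; apply Rinv_0_lt_compat; lra| lra].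
  - intros i Hi. destruct (Forall2_nth' _ p q 0 0 i HF ltac:(lia)) as [_ [_ H]]. exact H.
  - apply (final_bound k 600); auto; [lra| apply tv_le1; auto|].
    intros H4. pose proof (tv_bnd _ _ _ (tv_main k p H4 Hp)). fold q in H.
    replace (600 / INR k) with (1200 / INR k / 2) by (field; lra). exact H.
  - intros j Hj. apply (final_bound k 1201); auto; [lra| apply tv_le1; apply Forall_remove; auto|].
    intros H4. pose proof (tv_bnd _ _ _ (tv_loo k p j H4 Hp ltac:(lia))). fold q in H.
    replace (1201 / INR k) with (2402 / INR k / 2) by (field; lra). exact H.
Qed.
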